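(* Let $n,d\ge 1$, $r\in[0,1]$, $\omega\ge 0$, $\alpha\in(0,1]$, $K_\omega,K_\alpha>0$, and $0<\mu\le L\le nL$. Put $\mu^r_{\omega,\alpha}=\frac{rd}{(1-r)K_\omega+rK_\alpha}$ and $K^r=(1-r)K_\omega+rK_\alpha$. For $p,\tau\in(0,1]$ and $L_{\max}\in[L,nL]$ let $$T(p,\tau;L_{\max})=\max\Big\{\sqrt{\tfrac{L}{\alpha p\mu}},\sqrt{\tfrac{L}{\alpha\tau\mu}},\sqrt{\tfrac{\sqrt{LL_{\max}}(\omega+1)\sqrt{\omega\tau}}{\alpha\sqrt n\,\mu}},\sqrt{\tfrac{\sqrt{LL_{\max}}\sqrt{\omega+1}\sqrt{\omega\tau}}{\alpha\sqrt p\sqrt n\,\mu}},\sqrt{\tfrac{L_{\max}\omega(\omega+1)^2p}{n\mu}},\sqrt{\tfrac{L_{\max}\omega}{np\mu}},\tfrac1\alpha,\tfrac1\tau,\omega+1,\tfrac1p\Big\}$$ and $M(p,\tau;L_{\max})=\big((1-r)K_\omega+r(K_\alpha+pd)\big)\,T(p,\tau;L_{\max})+d$. Choose $$p^\star=\min\Big\{\frac{1}{\omega+1},\frac{1}{\mu^r_{\omega,\alpha}}\Big\}\quad(\text{with }1/0=+\infty),\qquad \tau^\star=\frac{(p^\star)^{1/3}}{(\omega+1)^{2/3}}.$$ Then, up to universal multiplicative constants (and logarithmic factors): (i) $(p^\star,\tau^\star)$ minimizes $\max_{L_{\max}\in[L,nL]}M(p,\tau;L_{\max})$ over $p,\tau\in(0,1]$;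 (ii) for every $L_{\max}\in[L,nL]$, $T(p^\star,\tau^\star;L_{\max})$ is of the order of $$T^{\mathrm{realistic}}=\max\Big\{\sqrt{\tfrac{L\max\{\omega+1,\mu^r_{\omega,\alpha}\}}{\alpha\mu}},\sqrt{\tfrac{L_{\max}\omega\max\{\omega+1,\mu^r_{\omega,\alpha}\}}{n\mu}},\tfrac1\alpha,\omega+1,\mu^r_{\omega,\alpha}\Big\};$$ (iii) the total communication complexity with this choice, $M(p^\star,\tau^\star;L_{\max})$, is of the order of $K^r\,T^{\mathrm{realistic}}+d$.
   Context: This concerns the method 2Direction for minimizing $f=\frac1n\sum_{i=1}^n f_i$ over $\mathbb R^d$ with $n$ workers, where each $f_i$ is $L_i$-smooth and convex, $L_{\max}=\max_i L_i$, $f$ is $L$-smooth and $\mu$-strongly convex (so that necessarily $L\le L_{\max}\le nL$). Workers use unbiased compressors with variance parameter $\omega$ (i.e. $\mathbb E[\mathcal C(x)]=x$, $\mathbb E\|\mathcal C(x)-x\|^2\le\omega\|x\|^2$) whose expected density (i.e. $\sup_x\mathbb E\|\mathcal C(x)\|_0$, the expected number of nonzero coordinates sent) is $K_\omega$; the server uses a biased compressor with contraction parameter $\alpha$ (i.e. $\mathbb E\|\mathcal C(x)-x\|^2\le(1-\alpha)\|x\|^2$) and expected density $K_\alpha$. The method has two hyper-parameters: a probability $p$ and a momentum $\tau$. Up to logarithmic factors, $T(p,\tau;L_{\max})$ is the number of iterations the method needs in the strongly convex case, and $M(p,\tau;L_{\max})$ is its total communication complexity $(1-r)\cdot(\text{worker-to-server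 cost})+r\cdot(\text{server-to-worker cost})$, where $r\in[0,1]$ weights the relative cost of the two directions (workers send $\Theta(K_\omega)$ coordinates per iteration; the server broadcasts $\Theta(K_\alpha)$ coordinates per iteration plus $\Theta(d)$ uncompressed coordinates with probability $p$; $d$ coordinates are sent at initialization). Here the ratio $L_{\max}/L$ is assumed unknown, hence the worst case over $L_{\max}\in[L,nL]$. ''Of the order of'' means equal up to universal positive multiplicative constants. *)

(* Defs.v *)
From HB Require Import structures.
From mathcomp Require Import all_boot all_order all_algebra.
From mathcomp Require Import all_classical all_reals all_analysis.
Set Implicit Arguments. Unset Strict Implicit. Unset Printing Implicit Defensive.
Import Order.TTheory GRing.Theory Num.Theory.
Local Open Scope classical_set_scope.
Local Open Scope ring_scope.

Section Defs.
Variable R : realType.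
Implicit Types (r om al Ko Ka mu L p tau Lmax : R).

Definition mu_r (d : nat) r Ko Ka : R := r * d%:R / ((1 - r) * Ko + r * Ka).

Definition K_r r Ko Ka : R := (1 - r) * Ko + r * Ka.

Definition Tit (n : nat) L mu om al p tau Lmax : R :=
  Num.max (Num.sqrt (L / (al * p * mu)))
 (Num.max (Num.sqrt (L / (al * tau * mu)))
 (Num.max (Num.sqrt (Num.sqrt (L * Lmax) * (om + 1) * Num.sqrt (om * tau)
                      / (al * Num.sqrt n%:R * mu)))
 (Num.max (Num.sqrt (Num.sqrt (L * Lmax) * Num.sqrt (om + 1) * Num.sqrt (om * tau)
                      / (al * Num.sqrt p * Num.sqrt n%:R * mu)))
 (Num.max (Num.sqrt (Lmax * om * (om + 1) ^+ 2 * p / (n%:R * mu)))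
 (Num.max (Num.sqrt (Lmax * om / (n%:R * p * mu)))
 (Num.max (al^-1)
 (Num.max (tau^-1)
 (Num.max (om + 1) (p^-1))))))))).

Definition Mcomm (n d : nat) r om al Ko Ka L mu p tau Lmax : R :=
  ((1 - r) * Ko + r * (Ka + p * d%:R)) * Tit n L mu om al p tau Lmax + d%:R.

Definition Mworst (n d : nat) r om al Ko Ka L mu p tau : R :=
  sup [set y | exists2 Lmax, L <= Lmax <= n%:R * L &
                 y = Mcomm n d r om al Ko Ka L mu p tau Lmax].

Definition pstar (d : nat) r om Ko Ka : R :=
  if mu_r d r Ko Ka == 0 then (om + 1)^-1
  else Num.min (om + 1)^-1 (mu_r d r Ko Ka)^-1.

Definition taustar (d : nat) r om Ko Ka : R :=
  pstar d r om Ko Ka `^ (3%:R)^-1 / (om + 1) `^ (2%:R / 3%:R).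

Definition Treal (n d : nat) r om al Ko Ka L mu Lmax : R :=
  let m := Num.max (om + 1) (mu_r d r Ko Ka) in
  Num.max (Num.sqrt (L * m / (al * mu)))
 (Num.max (Num.sqrt (Lmax * om * m / (n%:R * mu)))
 (Num.max (al^-1)
 (Num.max (om + 1) (mu_r d r Ko Ka)))).

End Defs.

(* Main.v *)
Require Import Defs.
From HB Require Import structures.
From mathcomp Require Import all_boot all_order all_algebra.
From mathcomp Require Import all_classical all_reals all_analysis.
From mathcomp.algebra_tactics Require Import ring lra.
Import Order.TTheory GRing.Theory Num.Theory.
Local Open Scope classical_set_scope.
Local Open Scope ring_scope.

Lemma maxL {R : realType} (x a b : R) : x <= a -> x <= Num.max a b.
Proof. by move=> h; rewrite le_max h. Qed.
Lemma maxR {R : realType} (x a b : R) : x <= b -> x <= Num.max a b.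
Proof. by move=> h; rewrite le_max h orbT. Qed.
Lemma mulmax_le {R : realType} (K a b c : R) :
  K * a <= c -> K * b <= c -> K * Num.max a b <= c.
Proof. by case: (leP a b). Qed.
Lemma max_le {R : realType} (a b c : R) : a <= c -> b <= c -> Num.max a b <= c.
Proof. by move=> h1 h2; rewrite ge_max h1 h2. Qed.

Lemma sq_le_sqrt {R : realType} (a b : R) : 0 <= a -> a ^+ 2 <= b -> a <= Num.sqrt b.
Proof.
move=> a0 h; have b0 : 0 <= b by apply: le_trans h; rewrite sqr_ge0.
by rewrite -(ger0_norm a0) -sqrtr_sqr ler_sqrt.
Qed.
Lemma sqrt_le_sq {R : realType} (a b : R) : 0 <= b -> a <= b ^+ 2 -> Num.sqrt a <= b.
Proof.
by move=> b0 h; rewrite -(ger0_norm b0) -sqrtr_sqr ler_sqrt // sqr_ge0.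
Qed.
Lemma sqrt_mono {R : realType} (a b : R) : 0 <= b -> a <= b -> Num.sqrt a <= Num.sqrt b.
Proof. by move=> b0 h; rewrite ler_sqrt. Qed.
Lemma sqr_le {R : realType} (a b : R) : 0 <= a -> 0 <= b -> a ^+ 2 <= b ^+ 2 -> a <= b.
Proof. move=> a0 b0 h; nra. Qed.
Lemma le_sqr {R : realType} (a b : R) : 0 <= a -> a <= b -> a ^+ 2 <= b ^+ 2.
Proof. move=> a0 h; nra. Qed.
Lemma sqrt_sq {R : realType} (a : R) : 0 <= a -> Num.sqrt a ^+ 2 = a.
Proof. exact: sqr_sqrtr. Qed.


Definition T' {R : realType} (X Z Y om al p tau : R) : R :=
  Num.max (Num.sqrt (X / p))
 (Num.max (Num.sqrt (X / tau))
 (Num.max (Num.sqrt (Z * (om + 1) * Num.sqrt (om * tau)))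
 (Num.max (Num.sqrt (Z * Num.sqrt (om + 1) * Num.sqrt (om * tau) / Num.sqrt p))
 (Num.max (Num.sqrt (Y * (om + 1) ^+ 2 * p))
 (Num.max (Num.sqrt (Y / p))
 (Num.max (al^-1)
 (Num.max (tau^-1)
 (Num.max (om + 1) (p^-1))))))))).

Lemma Tit_eq {R : realType} (n : nat) (L mu om al p tau Lmax : R) :
  (0 < n)%N -> 0 < al -> 0 < mu -> 0 < p -> 0 < tau ->
  Tit n L mu om al p tau Lmax =
  T' (L / (al * mu)) (Num.sqrt (L * Lmax) / (al * Num.sqrt n%:R * mu))
     (Lmax * om / (n%:R * mu)) om al p tau.
Proof.
move=> n0 al0 mu0 p0 t0.
have n0' : (0 : R) < n%:R by rewrite ltr0n.
have sn : Num.sqrt (n%:R : R) != 0 by rewrite gt_eqF // sqrtr_gt0.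
have sp : Num.sqrt p != 0 by rewrite gt_eqF // sqrtr_gt0.
have aln : al != 0 by rewrite gt_eqF.
have mun : mu != 0 by rewrite gt_eqF.
have pn : p != 0 by rewrite gt_eqF.
have tn : tau != 0 by rewrite gt_eqF.
have nn : (n%:R : R) != 0 by rewrite gt_eqF.
rewrite /Tit /T'.
congr (Num.max (Num.sqrt _) (Num.max (Num.sqrt _) (Num.max (Num.sqrt _)
  (Num.max (Num.sqrt _) (Num.max (Num.sqrt _) (Num.max (Num.sqrt _) _)))))).

all: field; rewrite ?aln ?mun ?pn ?tn ?nn ?sn ?sp //.
Qed.

Lemma Treal_eq {R : realType} (n d : nat) (r om al Ko Ka L mu Lmax : R) :
  (0 < n)%N -> 0 < al -> 0 < mu ->
  Treal n d r om al Ko Ka L mu Lmax =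
  let m := Num.max (om + 1) (mu_r d r Ko Ka) in
  Num.max (Num.sqrt (L / (al * mu) * m))
 (Num.max (Num.sqrt (Lmax * om / (n%:R * mu) * m))
 (Num.max (al^-1) m)).
Proof.
move=> n0 al0 mu0.
have n0' : (0 : R) < n%:R by rewrite ltr0n.
have aln : al != 0 by rewrite gt_eqF.
have mun : mu != 0 by rewrite gt_eqF.
have nn : (n%:R : R) != 0 by rewrite gt_eqF.
rewrite /Treal /=.
congr (Num.max (Num.sqrt _) (Num.max (Num.sqrt _) _)).
all: field; rewrite ?aln ?mun ?nn //.
Qed.


Lemma ii_upper {R : realType} (X Z Y om al p tau m : R) :
  0 < X -> 0 <= Z -> Z <= X -> 0 <= Y -> 0 <= om -> 0 < al -> 0 < p -> 0 < tau ->
  om + 1 <= m -> p * m = 1 -> p <= tau ->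
  (om + 1) ^+ 2 * om * tau <= m ^+ 2 -> (om + 1) * om * tau <= m ->
  T' X Z Y om al p tau <=
  Num.max (Num.sqrt (X * m)) (Num.max (Num.sqrt (Y * m)) (Num.max al^-1 m)).
Proof.
move=> X0 Z0 ZX Y0 om0 al0 p0 t0 om1 pm pt h1 h2.
have m0 : 0 < m by lra.
have pV : p^-1 = m by rewrite -[p^-1]mulr1 -pm mulrA mulVf ?mul1r // gt_eqF.
have tV : tau^-1 <= m by rewrite -pV lef_pV2 ?posrE.
have so : 0 <= Num.sqrt (om * tau) by exact: sqrtr_ge0.
have so2 : Num.sqrt (om * tau) ^+ 2 = om * tau by rewrite sqrt_sq // mulr_ge0 // ltW.
rewrite /T'.
repeat apply: max_le.
- by apply: maxL; rewrite pV.
- apply: maxL; apply: sqrt_mono; first by rewrite mulr_ge0 // ltW.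
  by apply: ler_wpM2l => //; exact: ltW.
- apply: maxL; apply: sqrt_mono; first by rewrite mulr_ge0 // ltW.
  rewrite -mulrA; apply: ler_pM => //; first by rewrite mulr_ge0 // addr_ge0.
  apply: sqr_le; [by rewrite mulr_ge0 // addr_ge0| exact: ltW|].
  by rewrite exprMn so2 mulrA.
- apply: maxL; apply: sqrt_mono; first by rewrite mulr_ge0 // ltW.
  rewrite -!mulrA; apply: ler_pM => //.
  apply: sqr_le; [by rewrite !mulr_ge0 ?sqrtr_ge0 // invr_ge0 sqrtr_ge0| exact: ltW|].
  rewrite !exprMn so2 exprVn sqrt_sq ?sqrt_sq ?(ltW p0) ?addr_ge0 // pV.
  have -> : (om + 1) * (om * tau * m) = (om + 1) * om * tau * m by ring.
  by rewrite expr2; apply: ler_wpM2r => //; exact: ltW.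
- apply: maxR; apply: maxL; apply: sqrt_mono; first by rewrite mulr_ge0 // ltW.
  rewrite -mulrA; apply: ler_wpM2l => //. nra.
- by apply: maxR; apply: maxL; rewrite pV.
- by apply: maxR; apply: maxR; apply: maxL.
- by apply: maxR; apply: maxR; apply: maxR.
- by apply: maxR; apply: maxR; apply: maxR.
- by apply: maxR; apply: maxR; apply: maxR; rewrite pV.
Qed.

Lemma ii_lower {R : realType} (X Z Y om al p tau m : R) :
  0 < p -> p * m = 1 ->
  Num.max (Num.sqrt (X * m)) (Num.max (Num.sqrt (Y * m)) (Num.max al^-1 m))
  <= T' X Z Y om al p tau.
Proof.
move=> p0 pm.
have pV : p^-1 = m by rewrite -[p^-1]mulr1 -pm mulrA mulVf ?mul1r // gt_eqF.
rewrite /T'; repeat apply: max_le.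
- by apply: maxL; rewrite pV.
- by do 5 apply: maxR; apply: maxL; rewrite pV.
- by do 6 apply: maxR; apply: maxL.
- by do 9 apply: maxR; rewrite pV.
Qed.


Lemma i_core {R : realType} (X W om al p tau K D r mr : R) :
  0 < X -> 0 <= W -> 0 <= om -> 0 < al -> 0 < p -> p <= 1 -> 0 < tau ->
  0 < K -> 0 <= D -> 0 <= r -> r <= 1 -> 0 <= mr -> K * mr = r * D ->
  K * Num.max (Num.sqrt (X * Num.max (om + 1) mr))
      (Num.max (Num.sqrt (W * Num.max (om + 1) mr)) (Num.max al^-1 (Num.max (om + 1) mr))) + D
  <= 3 * ((K + r * p * D) * T' X X W om al p tau + D).
Proof.
move=> X0 W0 om0 al0 p0 p1 t0 K0 D0 r0 r1 mr0 Kmr.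
set T := T' X X W om al p tau.
set P := K + r * p * D.
have t1 : Num.sqrt (X / p) <= T by rewrite /T /T'; apply: maxL.
have t2 : Num.sqrt (X / tau) <= T by rewrite /T /T'; do 1 apply: maxR; apply: maxL.
have t3 : Num.sqrt (X * (om + 1) * Num.sqrt (om * tau)) <= T
  by rewrite /T /T'; do 2 apply: maxR; apply: maxL.
have t5 : Num.sqrt (W * (om + 1) ^+ 2 * p) <= T
  by rewrite /T /T'; do 4 apply: maxR; apply: maxL.
have t6 : Num.sqrt (W / p) <= T by rewrite /T /T'; do 5 apply: maxR; apply: maxL.
have t7 : al^-1 <= T by rewrite /T /T'; do 6 apply: maxR; apply: maxL.
have t9 : om + 1 <= T by rewrite /T /T'; do 8 apply: maxR; apply: maxL.
have T0 : 0 <= T by apply: le_trans t9; lra.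
have rpD : 0 <= r * p * D by rewrite !mulr_ge0 // ltW.
have KP : K <= P by rewrite /P; lra.
have KT : K * T <= P * T by apply: ler_wpM2r.
have PT0 : 0 <= P * T by apply: mulr_ge0 => //; lra.
have sqT : forall a : R, 0 <= a -> Num.sqrt a <= T -> a <= T ^+ 2.
  by move=> a a0 h; have := @le_sqr _ _ _ (sqrtr_ge0 a) h; rewrite sqrt_sq.
have key : forall Q : R, 0 <= Q -> K * Num.sqrt (Q * mr) <= P * Num.sqrt (Q / p).
  move=> Q Q0; apply: sqr_le.
  - by rewrite mulr_ge0 ?sqrtr_ge0 // ltW.
  - by rewrite mulr_ge0 ?sqrtr_ge0 //; lra.
  rewrite !exprMn !sqrt_sq ?mulr_ge0 ?invr_ge0 ?(ltW p0) //.
  have h : K * r * D * p <= P ^+ 2 by rewrite /P; nra.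
  have -> : K ^+ 2 * (Q * mr) = (K * r * D * p) * (Q / p).
    have -> : K ^+ 2 * (Q * mr) = K * (K * mr) * Q by ring.
    by rewrite Kmr; field; rewrite gt_eqF.
  by apply: ler_wpM2r => //; rewrite mulr_ge0 // invr_ge0 ltW.
have D_M : D <= P * T + D by lra.
suff : K * Num.max (Num.sqrt (X * Num.max (om + 1) mr))
      (Num.max (Num.sqrt (W * Num.max (om + 1) mr)) (Num.max al^-1 (Num.max (om + 1) mr)))
       <= 2 * (P * T + D) by lra.
case: (leP (om + 1) mr) => hm.
- apply: mulmax_le; [|apply: mulmax_le; [|apply: mulmax_le]].
  + apply: le_trans (key _ (ltW X0)) _; apply: le_trans (ler_wpM2l _ t1) _; lra.
  + apply: le_trans (key _ W0) _; apply: le_trans (ler_wpM2l _ t6) _; lra.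
  + apply: le_trans (ler_wpM2l (ltW K0) t7) _; lra.
  + rewrite Kmr; nra.
- apply: mulmax_le; [|apply: mulmax_le; [|apply: mulmax_le]].
  + have h : Num.sqrt (X * (om + 1)) <= 2 * T.
      apply: sqrt_le_sq; first lra.
      have h2 : X * (om + 1) <= 2 * T ^+ 2.
        case: (leP (tau * (om + 1)) 1) => ht.
        * have : X * (om + 1) <= X / tau by rewrite ler_pdivlMr //; nra.
          move=> h4.
          have h3 : X / tau <= T ^+ 2 by apply: (sqT _ _ t2); rewrite ?mulr_ge0 // ?invr_ge0 ltW.
          nra.
        * have hX : X <= X / p by rewrite ler_pdivlMr //; nra.
          have hso : om <= (om + 1) * Num.sqrt (om * tau).
            apply: sqr_le => //; first by rewrite mulr_ge0 ?sqrtr_ge0 //; lra.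
            rewrite exprMn sqrt_sq; last by rewrite mulr_ge0 // ltW.
            nra.
          have h3 : X / p <= T ^+ 2 by apply: (sqT _ _ t1); rewrite ?mulr_ge0 // ?invr_ge0 ltW.
          have h4 := sqT _ _ t3.
          have h5 : 0 <= X * (om + 1) * Num.sqrt (om * tau).
            by rewrite !mulr_ge0 ?sqrtr_ge0 //; lra.
          have {}h4 := h4 h5.
          have h6 : X * om <= X * (om + 1) * Num.sqrt (om * tau).
            by rewrite -mulrA; apply: ler_wpM2l => //; exact: ltW.
          nra.
      nra.
    apply: le_trans (ler_wpM2l (ltW K0) h) _; nra.
  + have h : Num.sqrt (W * (om + 1)) <= T.
      apply: sqrt_le_sq => //.
      case: (leP 1 (p * (om + 1))) => hp.
      * apply: le_trans (sqT _ _ t5); last by rewrite !mulr_ge0 // ?ltW //; lra.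
        have hw : 0 <= W * (om + 1) by rewrite mulr_ge0 //; lra.
        have -> : W * (om + 1) ^+ 2 * p = W * (om + 1) * (p * (om + 1)) by ring.
        by rewrite -{1}(mulr1 (W * (om + 1))); apply: ler_wpM2l.
      * apply: le_trans (sqT _ _ t6); last by rewrite mulr_ge0 // invr_ge0 ltW.
        rewrite ler_pdivlMr //; nra.
    apply: le_trans (ler_wpM2l (ltW K0) h) _; nra.
  + apply: le_trans (ler_wpM2l (ltW K0) t7) _; lra.
  + apply: le_trans (ler_wpM2l (ltW K0) t9) _; lra.
Qed.


Lemma Kr_gt0 {R : realType} (r Ko Ka : R) : 0 <= r <= 1 -> 0 < Ko -> 0 < Ka ->
  0 < K_r r Ko Ka.
Proof.
move=> /andP[r0 r1] Ko0 Ka0; rewrite /K_r.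
case: (leP r 0) => hr.
  have -> : r = 0 by lra.
  by rewrite subr0 mul1r mul0r addr0.
have : 0 < r * Ka by rewrite mulr_gt0.
have : 0 <= (1 - r) * Ko by rewrite mulr_ge0 //; lra.
lra.
Qed.

Lemma mur_ge0 {R : realType} (d : nat) (r Ko Ka : R) : 0 <= r <= 1 -> 0 < Ko -> 0 < Ka ->
  0 <= mu_r d r Ko Ka.
Proof.
move=> hr Ko0 Ka0; have := @Kr_gt0 _ _ _ _ hr Ko0 Ka0; rewrite /K_r /mu_r => h.
case/andP: hr => r0 r1.
by rewrite mulr_ge0 ?mulr_ge0 ?invr_ge0 // ltW.
Qed.

Lemma Kr_mur {R : realType} (d : nat) (r Ko Ka : R) : 0 <= r <= 1 -> 0 < Ko -> 0 < Ka ->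
  K_r r Ko Ka * mu_r d r Ko Ka = r * d%:R.
Proof.
move=> hr Ko0 Ka0; have := @Kr_gt0 _ _ _ _ hr Ko0 Ka0; rewrite /K_r /mu_r => h.
by field; rewrite gt_eqF.
Qed.

Lemma pstar_eq {R : realType} (d : nat) (r om Ko Ka : R) : 0 <= om -> 0 <= r <= 1 ->
  0 < Ko -> 0 < Ka ->
  pstar d r om Ko Ka = (Num.max (om + 1) (mu_r d r Ko Ka))^-1.
Proof.
move=> om0 hr Ko0 Ka0; have := @mur_ge0 _ d _ _ _ hr Ko0 Ka0.
rewrite /pstar; set mr := mu_r d r Ko Ka => mr0.
have o1 : 0 < om + 1 by lra.
case: eqP => [->|/eqP hne].
  by rewrite max_l //; lra.
have mr1 : 0 < mr by rewrite lt_def hne.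
case: (leP (om + 1) mr) => h.
  by rewrite min_r // lef_pV2 ?posrE.
by rewrite min_l // lef_pV2 ?posrE // ltW.
Qed.

Lemma cube_root {R : realType} (x : R) : 0 <= x -> (x `^ (3%:R)^-1) ^+ 3 = x.
Proof.
move=> x0; rewrite -powR_mulrn ?powR_ge0 // -powRrM mulVf ?powRr1 //.
Qed.

Lemma two_thirds {R : realType} (x : R) : 0 <= x ->
  x `^ (2%:R / 3%:R) = (x `^ (3%:R)^-1) ^+ 2.
Proof.
move=> x0; rewrite -powR_mulrn ?powR_ge0 // -powRrM mulrC.
done.
Qed.

Lemma ts_facts {R : realType} (om m ps : R) : 0 <= om -> om + 1 <= m -> ps = m^-1 ->
  let ts := ps `^ (3%:R)^-1 / (om + 1) `^ (2%:R / 3%:R) in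
  [/\ 0 < ts, ts <= 1, ps <= ts, (om + 1) ^+ 2 * om * ts <= m ^+ 2
    & (om + 1) * om * ts <= m].
Proof.
move=> om0 om1 -> ts; set q := m^-1.
have m0 : 0 < m by lra.
have q0 : 0 < q by rewrite invr_gt0.
have o0 : 0 <= om + 1 by lra.
rewrite /ts two_thirds //.
set a := q `^ _; set c := (om + 1) `^ _.
have a0 : 0 < a by rewrite powR_gt0.
have c0 : 0 <= c by rewrite powR_ge0.
have a3 : a ^+ 3 = q by rewrite cube_root // ltW.
have c3 : c ^+ 3 = om + 1 by rewrite cube_root.
have am : a ^+ 3 * m = 1 by rewrite a3 mulVf // gt_eqF.
have c1 : 1 <= c by apply: sqr_le => //; rewrite expr1n; nra.
have cn : c != 0 by rewrite gt_eqF //; lra.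
set t := c * a.
have t0 : 0 <= t by rewrite mulr_ge0 // ltW.
have t3 : t ^+ 3 <= 1.
  rewrite exprMn c3; apply: (@le_trans _ _ (m * a ^+ 3)); last by rewrite mulrC am.
  by apply: ler_wpM2r => //; exact: exprn_ge0 (ltW a0).
have t1 : t <= 1.
  case: (leP t 1) => // h; have h3 : 1 < t ^+ 3 by rewrite exprn_egt1.
  lra.
have c1' : c * 1 <= c * c by apply: ler_wpM2l.
have ts2 : a / c ^+ 2 * c ^+ 2 = a by rewrite mulfVK // expf_neq0.
have ts0 : 0 < a / c ^+ 2 by rewrite divr_gt0 // exprn_gt0 //; lra.
split => //.
- rewrite ler_pdivrMr ?exprn_gt0 //; last lra.
  rewrite mul1r; have : a <= t by rewrite /t; nra.
  nra.
- rewrite -a3 ler_pdivlMr ?exprn_gt0 //; last lra.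
  have -> : a ^+ 3 * c ^+ 2 = a * t ^+ 2 by rewrite /t; ring.
  have : t ^+ 2 <= 1 by nra.
  nra.
- have e : (om + 1) ^+ 2 * (om + 1) * (a / c ^+ 2) = t ^+ 7 * m ^+ 2.
    rewrite -c3; transitivity (c ^+ 7 * a * (a ^+ 3 * m) ^+ 2).
      by rewrite am expr1n mulr1; field.
    by rewrite /t; ring.
  have h1 : (om + 1) ^+ 2 * om * (a / c ^+ 2) <= (om + 1) ^+ 2 * (om + 1) * (a / c ^+ 2).
    apply: ler_wpM2r; first exact: ltW.
    apply: ler_wpM2l; [exact: exprn_ge0 | lra].
  apply: le_trans h1 _; rewrite e.
  have : t ^+ 7 <= 1 by apply: exprn_ile1.
  have : 0 <= m ^+ 2 by exact: sqr_ge0.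
  nra.
- have e : (om + 1) * (om + 1) * (a / c ^+ 2) = t ^+ 4 * m.
    rewrite -c3; transitivity (c ^+ 4 * a * (a ^+ 3 * m)).
      by rewrite am mulr1; field.
    by rewrite /t; ring.
  have h1 : (om + 1) * om * (a / c ^+ 2) <= (om + 1) * (om + 1) * (a / c ^+ 2).
    apply: ler_wpM2r; first exact: ltW.
    apply: ler_wpM2l; [done | lra].
  apply: le_trans h1 _; rewrite e.
  have : t ^+ 4 <= 1 by apply: exprn_ile1.
  nra.
Qed.


Lemma max_mono {R : realType} (a b c d : R) : a <= c -> b <= d -> Num.max a b <= Num.max c d.
Proof. by move=> h1 h2; apply: max_le; [apply: maxL | apply: maxR]. Qed.

Lemma T'_mono {R : realType} (X Z Y Z' Y' om al p tau : R) :
  0 <= Z -> Z <= Z' -> 0 <= Y -> Y <= Y' -> 0 <= om -> 0 < p -> 0 < tau ->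
  T' X Z Y om al p tau <= T' X Z' Y' om al p tau.
Proof.
move=> Z0 ZZ Y0 YY om0 p0 t0.
have o0 : 0 <= om + 1 by lra.
have s1 := sqrtr_ge0 (om * tau).
have s2 := sqrtr_ge0 (om + 1).
have s3 : 0 <= (Num.sqrt p)^-1 by rewrite invr_ge0 sqrtr_ge0.
rewrite /T'; apply: max_mono => //; apply: max_mono => //.
apply: max_mono.
  apply: sqrt_mono; first by rewrite !mulr_ge0 //; lra.
  by rewrite -!mulrA; apply: ler_wpM2r => //; rewrite mulr_ge0.
apply: max_mono.
  apply: sqrt_mono; first by rewrite !mulr_ge0 //; lra.
  by rewrite -!mulrA; apply: ler_wpM2r => //; rewrite !mulr_ge0.
apply: max_mono.
  apply: sqrt_mono; first by rewrite !mulr_ge0 ?exprn_ge0 //; lra.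
  by rewrite -!mulrA; apply: ler_wpM2r => //; rewrite !mulr_ge0 ?exprn_ge0 // ltW.
apply: max_mono => //.
  apply: sqrt_mono; first by rewrite mulr_ge0 ?invr_ge0 ?(ltW p0) //; lra.
by apply: ler_wpM2r => //; rewrite invr_ge0 ltW.
Qed.

Lemma sqrt_nL {R : realType} (n : nat) (L : R) : 0 <= L ->
  Num.sqrt (L * (n%:R * L)) = Num.sqrt n%:R * L.
Proof.
move=> L0; have -> : L * (n%:R * L) = n%:R * L ^+ 2 by ring.
by rewrite sqrtrM ?ler0n // sqrtr_sqr ger0_norm.
Qed.


Theorem theorem2 (R : realType) :
  exists C : R, 0 < C /\
  forall (n d : nat) (r om al Ko Ka mu L : R),
    (1 <= n)%N -> (1 <= d)%N ->
    0 <= r <= 1 -> 0 <= om -> 0 < al <= 1 -> 0 < Ko -> 0 < Ka ->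
    0 < mu -> mu <= L ->
    let ps := pstar d r om Ko Ka in
    let ts := taustar d r om Ko Ka in
    [/\ (* (i) (p_star, tau_star) minimizes the worst-case M, up to a constant *)
        (0 < ps <= 1 /\ 0 < ts <= 1) /\
        (forall p tau : R, 0 < p <= 1 -> 0 < tau <= 1 ->
           Mworst n d r om al Ko Ka L mu ps ts
             <= C * Mworst n d r om al Ko Ka L mu p tau),
        (* (ii) T(p_star, tau_star; Lmax) is of the order of T^realistic *)
        (forall Lmax : R, L <= Lmax <= n%:R * L ->
           Tit n L mu om al ps ts Lmax <= C * Treal n d r om al Ko Ka L mu Lmax /\
           Treal n d r om al Ko Ka L mu Lmax <= C * Tit n L mu om al ps ts Lmax)
      & (* (iii) M(p_star, tau_star; Lmax) is of the order of K^r T^realistic + d *)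
        (forall Lmax : R, L <= Lmax <= n%:R * L ->
           Mcomm n d r om al Ko Ka L mu ps ts Lmax
             <= C * (K_r r Ko Ka * Treal n d r om al Ko Ka L mu Lmax + d%:R) /\
           K_r r Ko Ka * Treal n d r om al Ko Ka L mu Lmax + d%:R
             <= C * Mcomm n d r om al Ko Ka L mu ps ts Lmax)].
Proof.
exists 6; split; first lra.
move=> n d r om al Ko Ka mu L n1 d1 hr om0 /andP[al0 al1] Ko0 Ka0 mu0 muL ps ts.
have L0 : 0 < L by lra.
have nR : (1 : R) <= n%:R by rewrite ler1n.
have dR : (1 : R) <= d%:R by rewrite ler1n.
have nL : L <= n%:R * L by rewrite ler_peMl //; lra.
have K0 := @Kr_gt0 _ _ _ _ hr Ko0 Ka0.
have mr0 := @mur_ge0 _ d _ _ _ hr Ko0 Ka0.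
have Kmr := @Kr_mur _ d _ _ _ hr Ko0 Ka0.
have pse := @pstar_eq _ d _ _ _ _ om0 hr Ko0 Ka0.
case/andP: (hr) => r0 r1.
set K := K_r r Ko Ka in K0 Kmr *.
set mr := mu_r d r Ko Ka in mr0 Kmr pse *.
set m := Num.max (om + 1) mr in pse.
have om1 : om + 1 <= m by apply: maxL.
have mrm : mr <= m by apply: maxR.
have m0 : 0 < m by lra.
have ps0 : 0 < ps by rewrite /ps pse invr_gt0.
have psm : ps * m = 1 by rewrite /ps pse mulVf // gt_eqF.
have [ts0 ts1 pts h1 h2] : [/\ 0 < ts, ts <= 1, ps <= ts,
    (om + 1) ^+ 2 * om * ts <= m ^+ 2 & (om + 1) * om * ts <= m].
  exact: (@ts_facts _ om m ps om0 om1 pse).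
set X := L / (al * mu).
have X0 : 0 < X by rewrite divr_gt0 // mulr_gt0.
have n0 : (0 < n)%N by [].
have Mc : forall p tau Lmax, Mcomm n d r om al Ko Ka L mu p tau Lmax =
    (K + r * p * d%:R) * Tit n L mu om al p tau Lmax + d%:R.
  by move=> p tau Lmax; rewrite /Mcomm /K /K_r; congr (_ * _ + _); ring.
have Zb : forall Lmax, L <= Lmax <= n%:R * L ->
    0 <= Num.sqrt (L * Lmax) / (al * Num.sqrt n%:R * mu) <= X.
  move=> Lmax /andP[h3 h4]; apply/andP; split.
    by rewrite divr_ge0 ?sqrtr_ge0 // !mulr_ge0 ?sqrtr_ge0 // ltW.
  have sn : 0 < Num.sqrt (n%:R : R) by rewrite sqrtr_gt0; lra.
  have -> : X = Num.sqrt (L * (n%:R * L)) / (al * Num.sqrt n%:R * mu).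
    by rewrite sqrt_nL ?(ltW L0) // /X; field; rewrite !gt_eqF.
  apply: ler_wpM2r; first by rewrite invr_ge0 !mulr_ge0 // ltW.
  by apply: sqrt_mono; [rewrite !mulr_ge0 //; lra | apply: ler_wpM2l => //; lra].
have Yb : forall Lmax, L <= Lmax <= n%:R * L ->
    0 <= Lmax * om / (n%:R * mu) <= L * om / mu.
  move=> Lmax /andP[h3 h4]; apply/andP; split.
    by rewrite divr_ge0 ?mulr_ge0 //; lra.
  rewrite ler_pdivrMr ?mulr_gt0 //; last lra.
  have -> : L * om / mu * (n%:R * mu) = n%:R * L * om by field; rewrite gt_eqF.
  by apply: ler_wpM2r.
have iiU : forall Lmax, L <= Lmax <= n%:R * L ->
    Tit n L mu om al ps ts Lmax <= Treal n d r om al Ko Ka L mu Lmax.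
  move=> Lmax hL; have /andP[z0 zX] := Zb _ hL; have /andP[y0 _] := Yb _ hL.
  rewrite Tit_eq // Treal_eq //=.
  by apply: ii_upper.
have iiL : forall Lmax, L <= Lmax <= n%:R * L ->
    Treal n d r om al Ko Ka L mu Lmax <= Tit n L mu om al ps ts Lmax.
  move=> Lmax hL; rewrite Tit_eq // Treal_eq //=.
  exact: ii_lower.
have Tr0 : forall Lmax, 0 <= Treal n d r om al Ko Ka L mu Lmax.
  move=> Lmax; rewrite Treal_eq //=; apply: maxR; apply: maxR; apply: maxR; apply: maxL; lra.
have rpd : r * ps * d%:R <= K.
  have -> : r * ps * d%:R = (K * mr) * ps by rewrite Kmr; ring.
  rewrite -mulrA -{2}(mulr1 K); apply: ler_wpM2l; first lra.
  rewrite -psm mulrC; exact: (ler_wpM2l (ltW ps0) mrm).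
have rpd0 : 0 <= r * ps * d%:R by rewrite !mulr_ge0 //; lra.
have iiiU : forall Lmax, L <= Lmax <= n%:R * L ->
    Mcomm n d r om al Ko Ka L mu ps ts Lmax <=
    2 * (K * Treal n d r om al Ko Ka L mu Lmax + d%:R).
  move=> Lmax hL; rewrite Mc.
  have := iiU _ hL; have := iiL _ hL; have := Tr0 Lmax.
  set T1 := Tit _ _ _ _ _ _ _ _; set T2 := Treal _ _ _ _ _ _ _ _ _ _.
  move=> h3 h4 h5.
  have : (K + r * ps * d%:R) * T1 <= (2 * K) * T2.
    apply: ler_pM => //; [lra | lra | lra].
  lra.
split.
-
  split.
    split; apply/andP; split => //.
    by rewrite /ps pse invf_le1 //; lra.
  move=> p tau /andP[p0 p1] /andP[t0 t1].
  set S2 := [set y | exists2 Lmax, L <= Lmax <= n%:R * L &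
                 y = Mcomm n d r om al Ko Ka L mu p tau Lmax].
  have monoM : forall Lmax, L <= Lmax <= n%:R * L ->
      Mcomm n d r om al Ko Ka L mu p tau Lmax <=
      Mcomm n d r om al Ko Ka L mu p tau (n%:R * L).
    move=> Lmax hL; rewrite !Mc; apply: lerD => //; apply: ler_wpM2l.
      by rewrite addr_ge0 ?mulr_ge0 //; lra.
    have hn : L <= n%:R * L <= n%:R * L by rewrite nL lexx.
    have /andP[z0 zX] := Zb _ hL; have /andP[y0 yW] := Yb _ hL.
    have /andP[z0' zX'] := Zb _ hn; have /andP[y0' yW'] := Yb _ hn.
    rewrite !Tit_eq //; apply: T'_mono => //.
      apply: ler_wpM2r; first by rewrite invr_ge0 !mulr_ge0 ?sqrtr_ge0 // ltW.
      by apply: sqrt_mono; [rewrite !mulr_ge0 //; lra | apply: ler_wpM2l => //; lra].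
    apply: ler_wpM2r; first by rewrite invr_ge0 mulr_ge0 //; lra.
    by apply: ler_wpM2r => //; case/andP: hL.
  have ubS2 : has_ubound S2.
    exists (Mcomm n d r om al Ko Ka L mu p tau (n%:R * L)).
    by move=> y [Lmax hL ->]; apply: monoM.
  have inS2 : S2 (Mcomm n d r om al Ko Ka L mu p tau (n%:R * L)).
    by exists (n%:R * L) => //; rewrite nL lexx.
  have Msup := ub_le_sup ubS2 inS2.
  rewrite /Mworst; apply: ge_sup.
    by exists (Mcomm n d r om al Ko Ka L mu ps ts L); exists L => //; rewrite lexx.
  move=> y [Lmax hL ->].
  have hn : L <= n%:R * L <= n%:R * L by rewrite nL lexx.
  apply: le_trans (iiiU _ hL) _.
  have TT : Treal n d r om al Ko Ka L mu Lmax <= Treal n d r om al Ko Ka L mu (n%:R * L).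
    have /andP[y0 yW] := Yb _ hL; have /andP[y0' yW'] := Yb _ hn.
    rewrite !Treal_eq //=; apply: max_mono => //; apply: max_mono => //.
    apply: sqrt_mono; first by apply: mulr_ge0 => //; exact: ltW m0.
    apply: ler_wpM2r; first exact: ltW m0.
    have -> : n%:R * L * om / (n%:R * mu) = L * om / mu by field; rewrite !gt_eqF //; lra.
    done.
  have core : K * Treal n d r om al Ko Ka L mu (n%:R * L) + d%:R <=
      3 * Mcomm n d r om al Ko Ka L mu p tau (n%:R * L).
    have /andP[z0' zX'] := Zb _ hn.
    rewrite Mc Tit_eq // Treal_eq //=.
    have -> : n%:R * L * om / (n%:R * mu) = L * om / mu by field; rewrite !gt_eqF //; lra.
    have -> : Num.sqrt (L * (n%:R * L)) / (al * Num.sqrt n%:R * mu) = X.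
      have sn : 0 < Num.sqrt (n%:R : R) by rewrite sqrtr_gt0; lra.
      by rewrite sqrt_nL ?(ltW L0) // /X; field; rewrite !gt_eqF.
    apply: i_core => //; try lra.
    by rewrite divr_ge0 ?mulr_ge0 //; lra.
  have : 0 <= K * (Treal n d r om al Ko Ka L mu (n%:R * L) - Treal n d r om al Ko Ka L mu Lmax).
    by rewrite mulr_ge0 //; lra.
  lra.
- move=> Lmax hL; have := iiU _ hL; have := iiL _ hL; have := Tr0 Lmax.
  have T0 : 0 <= Tit n L mu om al ps ts Lmax by apply: le_trans (iiL _ hL); apply: Tr0.
  move=> *; split; lra.
- move=> Lmax hL; split.
    have := iiiU _ hL.
    have : 0 <= K * Treal n d r om al Ko Ka L mu Lmax by rewrite mulr_ge0 //; lra.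
    lra.
  rewrite Mc.
  have := iiL _ hL; have := Tr0 Lmax.
  set T1 := Tit _ _ _ _ _ _ _ _; set T2 := Treal _ _ _ _ _ _ _ _ _ _.
  move=> h3 h4.
  have : K * T2 <= (K + r * ps * d%:R) * T1 by apply: ler_pM => //; lra.
  have : 0 <= (K + r * ps * d%:R) * T1 by rewrite mulr_ge0 //; lra.
  lra.
Qed.
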